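(* For each elementary cellular automaton $F$ with rule number in $\{23, 50, 77, 178, 232\}$, $D(\textsc{Pred}_{F,n})=O(\log n)$.
   Context: An elementary cellular automaton (ECA) with rule number $N\in\{0,\dots,255\}$ is the map $F:\{0,1\}^{\mathbb Z}\to\{0,1\}^{\mathbb Z}$ given by $F(x)_i=f(x_{i-1},x_i,x_{i+1})$. Here the local rule $f:\{0,1\}^3\to\{0,1\}$ is determined by $N=\sum_{a,b,c\in\{0,1\}}2^{4a+2b+c}f(a,b,c)$. On a finite word of length $m\ge 3$, $F$ produces the word of length $m-2$ obtained by applying $f$ at every position whose full neighbourhood lies in the word. For $n\ge1$, $\textsc{Pred}_{F,n}:\{0,1\}^{2n+1}\to\{0,1\}$ maps a word $x=x_{-n}\cdots x_n$ to the single letter of $F^n(x)$, i.e. the state of the central cell after $n$ steps. For a function $g:X\times Y\to Z$, $D(g)$ is the minimal depth of a deterministic two-party protocol computing $g$. In such a protocol, Alice knows $x$ and Bob knows $y$. The protocol is a binary tree: each internal node is labelled by a function of Alice's input only or of Bob's input only, with values in $\{\text{left},\text{right}\}$, and each leaf is labelled by an output value. For $g:\{0,1\}^m\to Z$, set $D(g)=\max_{0\le i<m}D(g_i)$, where $g_i:\{0,1\}^i\times\{0,1\}^{m-i}\to Z$ is $g_i(x,y)=g(xy)$. *)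

(* Defs.v *)
From mathcomp Require Import all_boot.
Set Implicit Arguments. Unset Strict Implicit. Unset Printing Implicit Defensive.

Definition eca_rule (N : nat) (a b c : bool) : bool :=
  odd (N %/ 2 ^ (4 * a + 2 * b + c)).

Definition eca_step (N : nat) (w : seq bool) : seq bool :=
  [seq eca_rule N (nth false w i) (nth false w i.+1) (nth false w i.+2)
  | i <- iota 0 (size w - 2)].

(* Pred_{F,n} : {0,1}^{2n+1} -> {0,1}, the central cell after n steps. *)
Definition Pred (N n : nat) (x : seq bool) : bool :=
  head false (iter n (eca_step N) x).

Inductive protocol (X Y Z : Type) : Type :=
| PLeaf of Z
| PAlice of (X -> bool) & protocol X Y Z & protocol X Y Z
| PBob of (Y -> bool) & protocol X Y Z & protocol X Y Z.

Fixpoint prun X Y Z (p : protocol X Y Z) (x : X) (y : Y) : Z :=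
  match p with
  | PLeaf z => z
  | PAlice f l r => if f x then prun l x y else prun r x y
  | PBob f l r => if f y then prun l x y else prun r x y
  end.

Fixpoint pdepth X Y Z (p : protocol X Y Z) : nat :=
  match p with
  | PLeaf _ => 0
  | PAlice _ l r => (maxn (pdepth l) (pdepth r)).+1
  | PBob _ l r => (maxn (pdepth l) (pdepth r)).+1
  end.

(* D(g) <= k  for g : X * Y -> Z  (D is the minimal depth, so this is
   exactly the existence of a protocol of depth <= k computing g). *)
Definition D_le X Y Z (g : X -> Y -> Z) (k : nat) : Prop :=
  exists p : protocol X Y Z, pdepth p <= k /\ forall x y, prun p x y = g x y.

(* D(g) <= k for g : {0,1}^m -> Z, with D(g) = max_{0<=i<m} D(g_i),
   g_i(x,y) = g(xy), x in {0,1}^i, y in {0,1}^{m-i}. *)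
Definition Dword_le Z (m : nat) (g : seq bool -> Z) (k : nat) : Prop :=
  forall i, i < m ->
    D_le (fun (x : i.-tuple bool) (y : (m - i).-tuple bool) => g (val x ++ val y)) k.

(* Main.v *)
Require Import Defs.
From mathcomp Require Import all_boot zify.
Set Implicit Arguments. Unset Strict Implicit.


Section Proto.
Variables (X Y : finType) (g : X -> Y -> bool) (s : X -> nat).
Hypothesis hs : forall x x', s x = s x' -> forall y, g x y = g x' y.

Fixpoint build k acc : protocol X Y bool :=
  match k with
  | 0 => PBob (fun y => [exists x, (s x == acc) && g x y]) (PLeaf X Y true) (PLeaf X Y false)
  | k'.+1 => PAlice (fun x => acc + 2 ^ k' <= s x) (build k' (acc + 2 ^ k')) (build k' acc)
  end.

Lemma build_depth k acc : pdepth (build k acc) = k.+1.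
Proof. by elim: k acc => [|k IH] acc //=; rewrite !IH maxnn. Qed.

Lemma build_run k acc x y : acc <= s x < acc + 2 ^ k -> prun (build k acc) x y = g x y.
Proof.
elim: k acc => [|k IH] acc /= H.
  have ex : s x = acc by lia.
  case: (boolP (g x y)) => gxy.
    by have -> : [exists x0, (s x0 == acc) && g x0 y] by apply/existsP; exists x; rewrite ex eqxx.
  have -> // : [exists x0, (s x0 == acc) && g x0 y] = false.
  apply/negbTE/existsPn => x0; apply/negP => /andP [/eqP e gy].
  by move: gxy; rewrite (hs (x := x) (x' := x0)) ?gy // ex e.
rewrite expnS in H.
by case: ifP => h; apply: IH; lia.
Qed.

Lemma proto_le k : (forall x, s x < 2 ^ k) -> D_le g k.+1.
Proof.
move=> hk; exists (build k 0); rewrite build_depth; split => // x y.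
by apply: build_run; rewrite add0n hk.
Qed.
End Proto.


Lemma size_step N w : size (eca_step N w) = size w - 2.
Proof. by rewrite size_map size_iota. Qed.

Lemma nth_step N w k : k < size w - 2 ->
  nth false (eca_step N w) k = eca_rule N (nth false w k) (nth false w k.+1) (nth false w k.+2).
Proof. by move=> hk; rewrite (nth_map 0) ?size_iota // nth_iota. Qed.

Definition RP N b := forall u u' a c v v', addb a c = b ->
  [/\ eca_rule N u a c = eca_rule N u' a c, eca_rule N a c v = eca_rule N a c v'
    & addb (eca_rule N u a c) (eca_rule N a c v) = b].

Definition blk b (w : seq bool) j := addb (nth false w j) (nth false w j.+1) == b.

Section Dyn.
Variables (N : nat) (b : bool).
Hypothesis H : RP N b.
Local Notation F := (eca_step N).

Definition InvR w w' j := [/\ size w = size w', forall k, j <= k -> nth false w k = nth false w' k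
   & 0 < j -> j.+1 < size w -> blk b w j].
Definition InvL w w' p := [/\ size w = size w', forall k, k <= p -> nth false w k = nth false w' k
   & p < size w -> blk b w p.-1].

Lemma stepR w w' j : InvR w w' j -> InvR (F w) (F w') j.-1.
Proof.
case=> hs hw hb; split; first by rewrite !size_step hs.
  move=> k hk; case: (ltnP k (size w - 2)) => hks; last first.
    by rewrite !nth_default // size_step -?hs.
  rewrite !nth_step -?hs //.
  case: (leqP j k) => hjk; first by rewrite !hw //; lia.
  have ej : j = k.+1 by lia.
  subst j; have /eqP hb' := hb isT ltac:(lia).
  have [h1 _ _] := H (nth false w k) (nth false w' k) false false hb'.
  by rewrite h1 !hw.
move=> hj hj2; rewrite size_step in hj2.
have /eqP hb' := hb ltac:(lia) ltac:(lia).
rewrite /blk !nth_step; try lia.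
rewrite prednK; last lia.
have [_ _ h3] := H (nth false w j.-1) (nth false w j.-1) (nth false w j.+2) (nth false w j.+2) hb'.
rewrite h3 //; lia.
Qed.

Lemma iterR t w w' j : InvR w w' j -> InvR (iter t F w) (iter t F w') (j - t).
Proof.
elim: t w w' j => [|t IH] w w' j h; first by rewrite subn0.
rewrite !iterSr; have -> : j - t.+1 = j.-1 - t by lia.
exact/IH/stepR.
Qed.

Lemma stepL w w' q : InvL w w' q.+2 -> InvL (F w) (F w') q.+1.
Proof.
case=> hs hw hb; split; first by rewrite !size_step hs.
  move=> k hk; case: (ltnP k (size w - 2)) => hks; last first.
    by rewrite !nth_default // size_step -?hs.
  rewrite !nth_step -?hs //.
  case: (leqP k.+2 q.+2) => hjk; first by rewrite !hw //; lia.
  have ej : k = q.+1 by lia.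
  subst k; have /eqP hb' := hb ltac:(lia).
  have [_ h2 _] := H false false (nth false w q.+3) (nth false w' q.+3) hb'.
  by rewrite h2 !hw.
move=> hj; rewrite size_step in hj.
have /eqP hb' := hb ltac:(lia).
rewrite /blk /= !nth_step; try lia.
have [_ _ h3] := H (nth false w q) (nth false w q) (nth false w q.+3) (nth false w q.+3) hb'.
rewrite h3 //; lia.
Qed.

Lemma iterL t w w' q : InvL w w' (q.+1 + t) -> InvL (iter t F w) (iter t F w') q.+1.
Proof.
elim: t w w' => [|t IH] w w' h; first by rewrite addn0 in h.
rewrite !iterSr; apply: IH; apply: stepL; by rewrite addnS addSn in h.
Qed.
End Dyn.


Fixpoint lastb (P : pred nat) (k : nat) : option nat :=
  match k with 0 => None | k'.+1 => if P k' then Some k' else lastb P k' end.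

Lemma lastbP P k : match lastb P k with
  | Some j => [/\ j < k, P j & forall l, j < l < k -> ~~ P l]
  | None => forall l, l < k -> ~~ P l end.
Proof.
elim: k => [|k IH] //=; case: ifP => hP.
  by split => // l hl; lia.
case: (lastb P k) IH => [j [h1 h2 h3]|h].
  split; [lia|done|]; move=> l hl; case: (ltnP l k) => hlk; first by apply: h3; lia.
  have el : l = k by lia.
  by rewrite el hP.
move=> l hl; case: (ltnP l k) => hlk; first exact: h.
have el : l = k by lia.
  by rewrite el hP.
Qed.

Lemma Pred_nth N n w : Pred N n w = nth false (iter n (eca_step N) w) 0.
Proof. by rewrite /Pred; case: (iter _ _ _). Qed.

Section Main.
Variables (N : nat) (b : bool) (n : nat).
Hypothesis H : RP N b.

Definition summ (x : seq bool) : nat :=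
  if has (fun j => (n <= j) && blk b x j) (iota 0 (size x).-1)
  then nat_of_bool (Pred N n (x ++ nseq (2*n+1 - size x) false))
  else match lastb (blk b x) (size x).-1 with
       | Some j => 2 + 2*j + nth false x j
       | None => 2*n+2 + nth false x 0 end.

Lemma summ_lt x : summ x < 2 * n + 4.
Proof.
rewrite /summ; case: ifP => hh; first by case: (Pred _ _ _); lia.
have := lastbP (blk b x) (size x).-1.
case: (lastb _ _) => [j [h1 h2 h3]|_]; last by case: (nth _ _ _); lia.
have : j < n.
  case: (ltnP j n) => // hjn; move/negbT/hasPn: hh => /(_ j).
  by rewrite mem_iota hjn h2 /=; move=> /(_ ltac:(lia)).
by case: (nth _ _ _); lia.
Qed.

Lemma nth_catl (x y : seq bool) k : k < size x -> nth false (x ++ y) k = nth false x k.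
Proof. by move=> h; rewrite nth_cat h. Qed.

Lemma caseA x y y' j : size y = size y' -> j < (size x).-1 -> n <= j -> blk b x j ->
  Pred N n (x ++ y) = Pred N n (x ++ y').
Proof.
move=> hy hj hnj hb; rewrite !Pred_nth.
have hI : InvL b (x ++ y) (x ++ y') ((j - n).+1 + n).
  have -> : (j - n).+1 + n = j.+1 by lia.
  split; first by rewrite !size_cat hy.
    by move=> k hk; rewrite !nth_catl //; lia.
  by move=> _; rewrite /blk /= !nth_catl //; lia.
by case: (iterL H hI) => _ /(_ 0 isT).
Qed.

Lemma agree_from x x' j : size x = size x' -> nth false x j = nth false x' j ->
  (forall l, j <= l -> l.+1 < size x -> blk b x l = blk b x' l) ->
  forall k, j <= k -> nth false x k = nth false x' k.
Proof.
move=> hs h0 hl k hk; have -> : k = j + (k - j) by lia.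
elim: (k - j) => [|d IH]; first by rewrite addn0.
case: (ltnP (j + d).+1 (size x)) => hd; last by rewrite !nth_default -?hs //; lia.
have := hl (j + d) ltac:(lia) hd; rewrite /blk IH addnS.
by case: (nth _ x' _); case: (nth _ x _); case: (nth _ x' _); case: b.
Qed.

Lemma caseB x x' y j : size x = size x' -> nth false x j = nth false x' j ->
  (forall l, j <= l -> l.+1 < size x -> blk b x l = blk b x' l) ->
  (0 < j -> j.+1 < size x /\ blk b x j) -> j <= n ->
  Pred N n (x ++ y) = Pred N n (x' ++ y).
Proof.
move=> hs h0 hl hb hjn; rewrite !Pred_nth.
have hI : InvR b (x ++ y) (x' ++ y) j.
  split; first by rewrite !size_cat hs.
    move=> k hk; rewrite !nth_cat -hs; case: ifP => // _.
    exact: agree_from hk.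
  move=> hj _; have [h1 h2] := hb hj.
  by rewrite /blk !nth_catl //; lia.
case: (iterR H n hI) => _ /(_ 0) h _; apply: h; lia.
Qed.

Lemma summ_ok x x' y : size x = size x' -> size x + size y = 2 * n + 1 ->
  summ x = summ x' -> Pred N n (x ++ y) = Pred N n (x' ++ y).
Proof.
move=> hs hm; rewrite /summ -hs.
have hz : size (nseq (2 * n + 1 - size x) false) = size y by rewrite size_nseq; lia.
case: ifP => hA.
  have [j] := hasP hA; rewrite mem_iota => /andP [_ hj] /andP [hnj hbj].
  rewrite (caseA (y:=y) (y':=nseq (2 * n + 1 - size x) false) _ hj hnj hbj) //.
  case: ifP => hA'.
    have [j'] := hasP hA'; rewrite mem_iota => /andP [_ hj'] /andP [hnj' hbj'].
    rewrite (caseA (x:=x') (y:=y) (y':=nseq (2 * n + 1 - size x) false) _ (j:=j') ltac:(by rewrite -hs) hnj' hbj') //.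
    by case: (Pred _ _ _); case: (Pred _ _ _).
  have := lastbP (blk b x') (size x).-1.
  case: (lastb _ _) => [j' _|_]; case: (Pred _ _ _); case: (nth _ _ _); lia.
have hnA : forall j, j < (size x).-1 -> n <= j -> ~~ blk b x j.
  move=> j hj hnj; move/negbT/hasPn: hA => /(_ j); rewrite mem_iota hnj /=.
  by apply; lia.
case: ifP => hA'.
  have := lastbP (blk b x) (size x).-1.
  by case: (lastb _ _) => [j' _|_]; case: (Pred _ _ _); case: (nth _ _ _); lia.
have hnA' : forall j, j < (size x).-1 -> n <= j -> ~~ blk b x' j.
  move=> j hj hnj; move/negbT/hasPn: hA' => /(_ j); rewrite mem_iota hnj /=.
  by apply; lia.
have := lastbP (blk b x) (size x).-1; have := lastbP (blk b x') (size x).-1.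
case: (lastb _ _) => [j' [h1' h2' h3']|hN']; case: (lastb _ _) => [j [h1 h2 h3]|hN].
- have jn : j < n.
    by case: (ltnP j n) => // c; move: (hnA j h1 c); rewrite h2.
  move=> e; have ej : j = j' by move: e; case: (nth _ _ _); case: (nth _ _ _); lia.
  subst j'; apply: (@caseB x x' y j hs); try lia.
    move=> l hl hl2; case: (ltnP j l) => c.
      by rewrite (negbTE (h3 _ _)) ?(negbTE (h3' _ _)) //; lia.
    have el : l = j by lia.
    by rewrite el h2 h2'.
- have jn : j' < n.
    by case: (ltnP j' n) => // c; move: (hnA' j' h1' c); rewrite h2'.
  by case: (nth _ _ _); case: (nth _ _ _); lia.
- have jn : j < n.
    by case: (ltnP j n) => // c; move: (hnA j h1 c); rewrite h2.
  by case: (nth _ _ _); case: (nth _ _ _); lia.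
- move=> e; apply: (@caseB x x' y 0 hs); try lia.
  move=> l _ hl2; rewrite (negbTE (hN _ _)) ?(negbTE (hN' _ _)) //; lia.
Qed.
End Main.

Lemma RP_all N : N \in [:: 23; 50; 77; 178; 232] -> exists b, RP N b.
Proof.
rewrite !inE => /orP [/eqP->|/orP [/eqP->|/orP [/eqP->|/orP [/eqP->|/eqP->]]]].
- by exists false; move=> [] [] [] [] [] [] //.
- by exists true; move=> [] [] [] [] [] [] //.
- by exists true; move=> [] [] [] [] [] [] //.
- by exists true; move=> [] [] [] [] [] [] //.
- by exists false; move=> [] [] [] [] [] [] //.
Qed.

Lemma D_le_mono X Y Z (g : X -> Y -> Z) k k' : D_le g k -> k <= k' -> D_le g k'.
Proof. by move=> [p [h1 h2]] hk; exists p; split => //; apply: leq_trans hk. Qed.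

Theorem mainTheorem14 :
  forall N : nat, N \in [:: 23; 50; 77; 178; 232] ->
  exists C : nat, forall n : nat, 1 <= n ->
    Dword_le (2 * n + 1) (Pred N n) (C * (trunc_log 2 n).+1).
Proof.
move=> N hN; have [b hb] := @RP_all N hN; exists 4 => n hn i hi.
apply: (@D_le_mono _ _ _ _ (trunc_log 2 n + 3).+1); last lia.
apply: (@proto_le _ _ _ (fun x : i.-tuple bool => summ N b n (val x))).
  move=> x x' e y; apply: (summ_ok hb) => //; rewrite ?size_tuple //; lia.
move=> x; apply: (leq_trans (summ_lt N b n (val x))).
have := trunc_log_ltn n (isT : 1 < 2); rewrite !expnD expnS; lia.
Qed.
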